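(* Let $N$ be an even positive integer and $\hbar=1/(2\pi N)$. For $n,m\in\{0,\dots,N-1\}$ the matrix elements of $F$ on $\mathcal{H}_\hbar(0)$ are \[ (\Phi_n^{(0,0)},F\Phi_m^{(0,0)})_P=\sum_{a=0}^{N-1}(\mathcal{F}^N)^{-1}_{na}\,M^{(n)}_{am}, \] where $(\mathcal{F}^N)^{-1}_{na}=e^{2\pi i na/N}/\sqrt N$, $\mathcal{F}^{N/2}_{jk}=e^{-2\pi i jk/(N/2)}/\sqrt{N/2}$, and $M^{(n)}$ is the $N\times N$ block-diagonal matrix with $M^{(n)}_{am}=0$ unless $a,m$ both lie in $\{0,\dots,N/2-1\}$ or both lie in $\{N/2,\dots,N-1\}$, and: for $n$ even, $M^{(n)}_{am}=\mathcal{F}^{N/2}_{am}$ if $a,m<N/2$ and $M^{(n)}_{am}=\mathcal{F}^{N/2}_{a-N/2,\,m-N/2}$ if $a,m\ge N/2$; for $n$ odd, $M^{(n)}_{am}=e^{i\pi(n-2m)/N}\mathcal{F}^{N/2}_{am}$ if $a,m<N/2$ and $M^{(n)}_{am}=e^{i\pi(n-(2m-N))/N}\mathcal{F}^{N/2}_{a-N/2,\,m-N/2}$ if $a,m\ge N/2$.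
   Context: On $L^2(\mathbb{R})$ with $[\widehat{x},\widehat{p}]=i\hbar$, $|x\rangle_x$ are position eigen-distributions, and $\Phi_m^{(0,0)}=N^{-1/2}\sum_{k\in\mathbb{Z}}|m/N+k\rangle_x$ ($m\in\mathbb{Z}$; $\Phi_{m+N}^{(0,0)}=\Phi_m^{(0,0)}$). $\mathcal{H}_\hbar(0)$ is the $N$-dimensional space spanned by $\Phi_0^{(0,0)},\dots,\Phi_{N-1}^{(0,0)}$, equipped with the paper's inner product $(\cdot,\cdot)_P$, with respect to which these vectors are orthonormal. $X^s=e^{is\widehat{x}/\hbar}$, $Y^s=e^{is\widehat{p}/\hbar}$ for real $s$. Projections $L,R,E_x,O_x$ are multiplication in position representation by the indicators of $[0,1/2)+\mathbb{Z}$, $[1/2,1)+\mathbb{Z}$, $[0,1)+2\mathbb{Z}$, $[1,2)+2\mathbb{Z}$; $B,T,E_p,O_p$ are the analogous projections in momentum representation (momentum eigen-distributions normalized by $\langle x|p\rangle=(2\pi\hbar)^{-1/2}e^{ixp/\hbar}$) onto $[0,1/2)+\mathbb{Z}$, $[1/2,1)+\mathbb{Z}$, $[0,1)+2\mathbb{Z}$, $[1,2)+2\mathbb{Z}$; all act on $\delta$-comb distributions in the natural way. $S=\exp\!\left(-\frac{i\log2}{2\hbar}(\widehat{x}\widehat{p}+\widehat{p}\widehat{x})\right)$, acting by $S|x\rangle_x=\sqrt2|2x\rangle_x$. The propagator is $F=S(L+X^{-1}R)(E_p+Y^{-1/2}O_p)$, which the paper also writes as $(E_x+X^{-1/2}O_x)(B+Y^{-1}T)S$;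 $F$ maps $\mathcal{H}_\hbar(0)$ into itself. *)

(* Defs.v *)
From Stdlib Require Import Reals ZArith.
From Coquelicot Require Import Coquelicot.
Open Scope R_scope.

Definition expi (theta : R) : C := (cos theta, sin theta).

Fixpoint csum (n : nat) (f : nat -> C) : C :=
  match n with
  | O => RtoC 0
  | S k => Cplus (csum k f) (f k)
  end.

Section Model.
Variable N : nat.

Definition hbar : R := / (2 * PI * INR N).

(* Lattice representation: a delta-comb distribution supported on
   (1/(2N)) Z is represented by its coefficient function f : Z -> C,
   standing for  sum_{j in Z} f j |j/(2N)>_x .  *)
Definition comb := Z -> C.
Definition xpt (j : Z) : R := IZR j / (2 * INR N).

(* Phi_m^{(0,0)} = N^{-1/2} sum_k |m/N + k>_x ;  m/N + k = (2m + 2Nk)/(2N) *)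
Definition Phi (m : Z) : comb := fun j =>
  if Z.eqb (Z.modulo (j - 2 * m) (2 * Z.of_nat N)) 0
  then RtoC (/ sqrt (INR N)) else RtoC 0.

Definition ind_half0 (x : R) : bool :=
  if Rlt_dec (frac_part x) (1/2) then true else false.
Definition ind_half1 (x : R) : bool := negb (ind_half0 x).
Definition ind_even (x : R) : bool :=
  if Rlt_dec (frac_part (x / 2)) (1/2) then true else false.
Definition ind_odd (x : R) : bool := negb (ind_even x).

Definition bC (b : bool) : C := if b then RtoC 1 else RtoC 0.

Definition posproj (chi : R -> bool) (f : comb) : comb :=
  fun j => Cmult (bC (chi (xpt j))) (f j).

Definition L_ := posproj ind_half0.
Definition R_ := posproj ind_half1.

Definition Xpow (s : R) (f : comb) : comb :=
  fun j => Cmult (expi (s * xpt j / hbar)) (f j).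

(* Y^s = e^{i s p/hbar} acts by Y^s |x> = |x - s>.  For s = k/(2N) this is
   (Y^s f) j = f (j + k).  Ypow_lat k is Y^{k/(2N)}. *)
Definition Ypow_lat (k : Z) (f : comb) : comb := fun j => f (j + k)%Z.

(* S |x> = sqrt 2 |2x> *)
Definition S_ (f : comb) : comb := fun j =>
  if Z.even j then Cmult (RtoC (sqrt 2)) (f (Z.div j 2)) else RtoC 0.

(* Momentum-representation projection onto the set with indicator chi,
   for a comb on (1/(2N))Z that is periodic of period P (P >= 1) in x.
   With K = 2NP, its momentum representation is the comb
     sum_{t in Z} d_t |q_t>_p ,   q_t = 2 pi hbar t / P,
     d_t = (2 pi hbar)^{1/2} / P * sum_{r=0}^{K-1} f r e^{-i x_r q_t / hbar},
   (d is K-periodic, momentum period 2 pi hbar 2N = 2).  Multiplying d_t by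
   chi(q_t) (chi of momentum period dividing 2) and transforming back with
   <x|p> = (2 pi hbar)^{-1/2} e^{ixp/hbar} gives the comb below. *)
Definition mom_coef (P : nat) (f : comb) (t : nat) : C :=
  let K := (2 * N * P)%nat in
  let q := 2 * PI * hbar * INR t / INR P in
  Cmult (RtoC (sqrt (2 * PI * hbar) / INR P))
        (csum K (fun r => Cmult (f (Z.of_nat r)) (expi (- (xpt (Z.of_nat r) * q / hbar))))).

Definition momproj (P : nat) (chi : R -> bool) (f : comb) : comb := fun s =>
  let K := (2 * N * P)%nat in
  Cmult (RtoC (/ sqrt (2 * PI * hbar) * (INR P / INR K)))
    (csum K (fun t =>
       let q := 2 * PI * hbar * INR t / INR P in
       Cmult (Cmult (bC (chi q)) (mom_coef P f t)) (expi (xpt s * q / hbar)))).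

Definition E_p := momproj 1 ind_even.
Definition O_p := momproj 1 ind_odd.

Definition cadd (f g : comb) : comb := fun j => Cplus (f j) (g j).

(* F = S (L + X^{-1} R) (E_p + Y^{-1/2} O_p), applied to elements of
   H_hbar(0) (combs of x-period 1, hence P = 1 in the momentum projections);
   Y^{-1/2} = Ypow_lat (-N). *)
Definition F_op (f : comb) : comb :=
  let g := cadd (E_p f) (Ypow_lat (- Z.of_nat N) (O_p f)) in
  S_ (cadd (L_ g) (Xpow (-1) (R_ g))).

(* inner product (.,.)_P on H_hbar(0), making Phi_0..Phi_{N-1} orthonormal:
   psi = sum_n a_n Phi_n with a_n = sqrt N * (coefficient of |n/N>_x). *)
Definition innerP (psi phi : comb) : C :=
  csum N (fun n =>
    Cmult (Cconj (Cmult (RtoC (sqrt (INR N))) (psi (2 * Z.of_nat n)%Z)))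
          (Cmult (RtoC (sqrt (INR N))) (phi (2 * Z.of_nat n)%Z))).

Definition FNinv (n a : nat) : C :=
  Cmult (expi (2 * PI * INR n * INR a / INR N)) (RtoC (/ sqrt (INR N))).
Definition Fhalf (j k : nat) : C :=
  Cmult (expi (- (2 * PI * INR j * INR k / (INR N / 2)))) (RtoC (/ sqrt (INR N / 2))).

Definition Mmat (n a m : nat) : C :=
  let h := Nat.div N 2 in
  if andb (a <? h)%nat (m <? h)%nat then
    (if Nat.even n then Fhalf a m
     else Cmult (expi (PI * (INR n - 2 * INR m) / INR N)) (Fhalf a m))
  else if andb (h <=? a)%nat (h <=? m)%nat then
    (if Nat.even n then Fhalf (a - h) (m - h)
     else Cmult (expi (PI * (INR n - (2 * INR m - INR N)) / INR N)) (Fhalf (a - h) (m - h)))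
  else RtoC 0.

End Model.

(* Main.v *)
Require Import Defs.
From Stdlib Require Import Reals ZArith Lia Lra.
From Coquelicot Require Import Coquelicot.
Open Scope R_scope.



Lemma csum_ext n f g : (forall k, (k < n)%nat -> f k = g k) -> csum n f = csum n g.
Proof. induction n; intros H; simpl; auto. rewrite IHn; [|intros; apply H; lia]. rewrite H; auto. Qed.

Lemma csum_add n f g : csum n (fun k => Cplus (f k) (g k)) = Cplus (csum n f) (csum n g).
Proof. induction n; simpl. ring. rewrite IHn. ring. Qed.

Lemma csum_scal n c f : csum n (fun k => Cmult c (f k)) = Cmult c (csum n f).
Proof. induction n; simpl. ring. rewrite IHn. ring. Qed.

Lemma csum_split a b f : csum (a + b) f = Cplus (csum a f) (csum b (fun i => f (a + i)%nat)).
Proof. induction b; simpl. rewrite Nat.add_0_r. ring. rewrite Nat.add_succ_r; simpl. rewrite IHb. ring. Qed.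

Lemma csum_zero n f : (forall k, (k < n)%nat -> f k = RtoC 0) -> csum n f = RtoC 0.
Proof. induction n; intros H; simpl; auto. rewrite IHn; [|intros; apply H; lia]. rewrite H; [ring|lia]. Qed.

Lemma csum_single n k f : (k < n)%nat -> (forall i, (i < n)%nat -> i <> k -> f i = RtoC 0) -> csum n f = f k.
Proof.
  induction n; intros Hk H; [lia|]. simpl.
  destruct (Nat.eq_dec k n) as [->|Hne].
  - rewrite csum_zero; [ring|]. intros; apply H; lia.
  - rewrite IHn; [|lia|intros; apply H; lia]. rewrite (H n); [ring|lia|lia].
Qed.

Lemma csum_pair h f : csum (2 * h) f = csum h (fun a => Cplus (f (2 * a)%nat) (f (2 * a + 1)%nat)).
Proof. induction h. simpl. auto. replace (2 * S h)%nat with (S (S (2*h)))%nat by lia.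
 change (csum (S (S (2*h))) f) with (Cplus (Cplus (csum (2*h) f) (f (2*h)%nat)) (f (S (2*h)))).
 rewrite IHh. change (csum (S h) ?g) with (Cplus (csum h g) (g h)). cbv beta.
  replace (2*h+1)%nat with (S (2*h)) by lia. ring. Qed.

Lemma expi_add a b : expi (a + b) = Cmult (expi a) (expi b).
Proof. unfold expi, Cmult; simpl. rewrite cos_plus, sin_plus. f_equal; ring. Qed.

Lemma expi_2pi x j : expi (x + 2 * INR j * PI) = expi x.
Proof. unfold expi. rewrite cos_period, sin_period. auto. Qed.

Lemma expi_pi x : expi (x + PI) = Copp (expi x).
Proof. unfold expi, Copp. rewrite neg_cos, neg_sin. auto. Qed.

Lemma expi_eq x y j j' : x + 2 * INR j * PI = y + 2 * INR j' * PI -> expi x = expi y.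
Proof. intros H. rewrite <- (expi_2pi x j), <- (expi_2pi y j'), H. auto. Qed.

Lemma expi_eqm x y j j' : x + 2 * INR j * PI = y + PI + 2 * INR j' * PI -> expi x = Copp (expi y).
Proof. intros H. rewrite <- expi_pi. apply (expi_eq _ _ j j'). lra. Qed.

Lemma frac_small x : 0 <= x < 1 -> frac_part x = x.
Proof. intros H. destruct (Int_part_frac_part_spec x 0 x H) as [_ E]. simpl; ring. auto. Qed.

Lemma csum_split2 h f : csum (2 * h) f = Cplus (csum h f) (csum h (fun i => f (h + i)%nat)).
Proof. replace (2*h)%nat with (h+h)%nat by lia. apply csum_split. Qed.

Lemma comb2 x u y v : Cmult (Cmult (expi x) (RtoC u)) (Cmult (expi y) (RtoC v)) = Cmult (RtoC (u*v)) (expi (x+y)).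
Proof. rewrite expi_add, RtoC_mult. ring. Qed.

Lemma comb3 x u z y v : Cmult (Cmult (expi x) (RtoC u)) (Cmult (expi z) (Cmult (expi y) (RtoC v))) = Cmult (RtoC (u*v)) (expi (x + (z + y))).
Proof. rewrite !expi_add, RtoC_mult. ring. Qed.

Lemma const_eq x : 0 < x -> / sqrt x * / sqrt (x / 2) = sqrt 2 / x.
Proof. intros H. rewrite sqrt_div_alt by lra. pose proof (sqrt_lt_R0 _ H). pose proof (sqrt_lt_R0 2 ltac:(lra)).
  pose proof (sqrt_sqrt x ltac:(lra)). set (s := sqrt x) in *. rewrite <- H2. field. split; lra. Qed.



Lemma Phi_eq N z : Phi N z (2 * z)%Z = RtoC (/ sqrt (INR N)).
Proof. unfold Phi. replace (2*z - 2*z)%Z with 0%Z by lia. rewrite Zmod_0_l. reflexivity. Qed.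

Lemma Phi_ne N z j : (0 <= j < 2 * Z.of_nat N)%Z -> (0 <= 2 * z < 2 * Z.of_nat N)%Z -> j <> (2*z)%Z ->
  Phi N z j = RtoC 0.
Proof. intros H1 H2 H3. unfold Phi. destruct (Z.eqb_spec ((j - 2 * z) mod (2 * Z.of_nat N)) 0) as [E|E]; auto.
  apply Z.mod_divide in E; [|lia]. destruct E as [c Hc]. exfalso. destruct (Z.lt_trichotomy c 0) as [Hc'|[Hc'|Hc']]; [nia|subst; lia|nia]. Qed.

Lemma Cconj_RtoC r : Cconj (RtoC r) = RtoC r.
Proof. unfold Cconj, RtoC; simpl. f_equal. ring. Qed.

Lemma INR_posN N : (0 < N)%nat -> 0 < INR N.
Proof. intros; apply lt_0_INR; lia. Qed.

Lemma momproj_Phi N m chi s : (0 < N)%nat -> (m < N)%nat ->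
  momproj N 1 chi (Phi N (Z.of_nat m)) s =
  Cmult (RtoC (/(2*INR N) * /sqrt (INR N)))
    (csum (2*N) (fun t => Cmult (bC (chi (INR t / INR N))) (expi (PI * INR t * (IZR s - 2 * INR m) / INR N)))).
Proof.
  intros hN hm. pose proof (INR_posN N hN) as HN. pose proof PI_RGT_0 as HPI.
  assert (Hh : 0 < 2 * PI * hbar N). { unfold hbar. apply Rmult_lt_0_compat; [lra|]. apply Rinv_0_lt_compat. nra. }
  pose proof (sqrt_lt_R0 _ Hh) as Hc. pose proof (sqrt_lt_R0 _ HN) as HsN.
  unfold momproj. rewrite Nat.mul_1_r.
  rewrite (csum_ext _ _ (fun t => Cmult (RtoC (sqrt (2 * PI * hbar N) * / sqrt (INR N)))
     (Cmult (bC (chi (INR t / INR N))) (expi (PI * INR t * (IZR s - 2 * INR m) / INR N))))).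
  2:{ intros t Ht. unfold mom_coef. rewrite Nat.mul_1_r.
      rewrite (csum_single _ (2*m)%nat); [|lia|].
      2:{ intros i Hi Hne. rewrite Phi_ne; [ring|lia|lia|lia]. }
      rewrite Nat2Z.inj_mul. change (Z.of_nat 2) with 2%Z. rewrite Phi_eq.
      replace (2 * PI * hbar N * INR t / INR 1) with (INR t / INR N).
      2:{ unfold hbar. simpl INR. field. lra. }
      assert (E : Cmult (expi (- (xpt N (2 * Z.of_nat m)%Z * (INR t / INR N) / hbar N))) (expi (xpt N s * (INR t / INR N) / hbar N))
                  = expi (PI * INR t * (IZR s - 2 * INR m) / INR N)).
      { rewrite <- expi_add. f_equal. unfold xpt, hbar. rewrite mult_IZR, <- INR_IZR_INZ. field. lra. }
      rewrite <- E. simpl INR. rewrite Rdiv_1_r, RtoC_mult. ring. }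
  rewrite csum_scal. rewrite Cmult_assoc, <- RtoC_mult. f_equal. f_equal.
  rewrite mult_INR. simpl INR. field. lra.
Qed.

Lemma ind_even_val N t : (0 < N)%nat -> (t < 2 * N)%nat -> ind_even (INR t / INR N) = (t <? N)%nat.
Proof.
  intros hN ht. pose proof (INR_posN N hN) as HN.
  assert (Ht : INR t < 2 * INR N). { replace 2 with (INR 2) by (simpl; ring). rewrite <- mult_INR. apply lt_INR; lia. }
  pose proof (pos_INR t) as Ht0.
  set (x := INR t / INR N / 2). assert (Hx : x * (2 * INR N) = INR t) by (unfold x; field; lra).
  unfold ind_even. fold x. rewrite frac_small by nra.
  destruct (Rlt_dec x (1/2)) as [H|H]; destruct (Nat.ltb_spec t N) as [H'|H']; auto.
  - apply le_INR in H'. nra.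
  - apply lt_INR in H'. nra.
Qed.

Lemma Ep_Phi N m s : (0 < N)%nat -> (m < N)%nat ->
  E_p N (Phi N (Z.of_nat m)) s =
  Cmult (RtoC (/(2*INR N) * /sqrt (INR N)))
    (csum N (fun t => expi (PI * INR t * (IZR s - 2 * INR m) / INR N))).
Proof.
  intros hN hm. unfold E_p. rewrite momproj_Phi by auto. f_equal.
  replace (2*N)%nat with (N+N)%nat by lia. rewrite csum_split.
  rewrite (csum_zero N (fun i => Cmult (bC (ind_even (INR (N + i) / INR N))) _)).
  2:{ intros k Hk. rewrite ind_even_val by lia. replace (N + k <? N)%nat with false.
      2:{ symmetry. apply Nat.ltb_ge. lia. } simpl. ring. }
  rewrite Cplus_0_r. apply csum_ext. intros k Hk. rewrite ind_even_val by lia.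
  replace (k <? N)%nat with true by (symmetry; apply Nat.ltb_lt; lia). simpl. ring.
Qed.

Lemma Op_Phi N m s : (0 < N)%nat -> (m < N)%nat ->
  O_p N (Phi N (Z.of_nat m)) s =
  Cmult (RtoC (/(2*INR N) * /sqrt (INR N)))
    (csum N (fun u => expi (PI * INR (N + u) * (IZR s - 2 * INR m) / INR N))).
Proof.
  intros hN hm. unfold O_p. rewrite momproj_Phi by auto. f_equal.
  replace (2*N)%nat with (N+N)%nat by lia. rewrite csum_split.
  rewrite (csum_zero N).
  2:{ intros k Hk. unfold ind_odd. rewrite ind_even_val by lia.
      replace (k <? N)%nat with true by (symmetry; apply Nat.ltb_lt; lia). simpl. ring. }
  rewrite Cplus_0_l. apply csum_ext. intros k Hk. unfold ind_odd. rewrite ind_even_val by lia.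
  replace (N + k <? N)%nat with false by (symmetry; apply Nat.ltb_ge; lia). simpl. ring.
Qed.

Lemma half0_val N n : (0 < N)%nat -> (n < N)%nat -> ind_half0 (xpt N (Z.of_nat n)) = true.
Proof.
  intros hN hn. pose proof (INR_posN N hN) as HN. apply lt_INR in hn. pose proof (pos_INR n).
  unfold ind_half0, xpt. rewrite <- INR_IZR_INZ.
  set (x := INR n / (2 * INR N)). assert (Hx : x * (2 * INR N) = INR n) by (unfold x; field; lra).
  rewrite frac_small by nra. destruct (Rlt_dec x (1/2)); auto. nra.
Qed.

Lemma LHS_red N n m : (0 < N)%nat -> (n < N)%nat -> (m < N)%nat ->
  innerP N (Phi N (Z.of_nat n)) (F_op N (Phi N (Z.of_nat m))) =
  Cmult (RtoC (sqrt (INR N))) (Cmult (RtoC (sqrt 2))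
    (Cplus (E_p N (Phi N (Z.of_nat m)) (Z.of_nat n)) (O_p N (Phi N (Z.of_nat m)) (Z.of_nat n + - Z.of_nat N)%Z))).
Proof.
  intros hN hn hm. pose proof (INR_posN N hN) as HN. pose proof (sqrt_lt_R0 _ HN) as HsN.
  unfold innerP. rewrite (csum_single _ n); [|lia|].
  2:{ intros i Hi Hne. rewrite Phi_ne; [|lia|lia|lia]. rewrite <- RtoC_mult, Rmult_0_r, Cconj_RtoC. ring. }
  rewrite Phi_eq, <- RtoC_mult, Rinv_r by lra. rewrite Cconj_RtoC.
  unfold F_op, S_. rewrite Z.even_mul. simpl Z.even. simpl orb. cbv iota.
  rewrite (Z.mul_comm 2), Z.div_mul by lia.
  unfold cadd, L_, R_, Xpow, posproj, ind_half1. rewrite half0_val by auto. simpl bC. unfold Ypow_lat. ring.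
Qed.



Ltac nrm := rewrite ?plus_INR, ?mult_INR, ?plus_IZR, ?opp_IZR, <- ?INR_IZR_INZ, ?plus_INR, ?mult_INR; simpl INR.

Lemma LHS_even N n m h p : (0 < N)%nat -> (n < N)%nat -> (m < N)%nat -> N = (2*h)%nat -> n = (2*p)%nat ->
  innerP N (Phi N (Z.of_nat n)) (F_op N (Phi N (Z.of_nat m))) =
  Cmult (RtoC (sqrt 2 / INR N)) (csum h (fun a => expi (PI * (2 * INR a) * (INR n - 2 * INR m) / INR N))).
Proof.
  intros hN hn hm HNh Hnp. pose proof (INR_posN N hN) as HN. pose proof (sqrt_lt_R0 _ HN) as HsN.
  rewrite LHS_red, Ep_Phi, Op_Phi by auto.
  rewrite <- Cmult_plus_distr_l, <- csum_add.
  assert (Hh : INR h <> 0). { subst N. rewrite mult_INR in HN. simpl in HN. lra. }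
  subst N n. rewrite csum_pair.
  rewrite (csum_ext _ _ (fun a => Cmult (RtoC 2) (expi (PI * (2 * INR a) * (INR (2*p) - 2 * INR m) / INR (2*h))))).
  2:{ intros a Ha.
      match goal with |- Cplus (Cplus (expi ?a0) (expi ?b0)) (Cplus (expi ?a1) (expi ?b1)) = _ =>
        rewrite (expi_eq b0 (PI * (2 * INR a) * (INR (2*p) - 2 * INR m) / INR (2*h)) (m+h+a) p),
                (expi_eq a0 (PI * (2 * INR a) * (INR (2*p) - 2 * INR m) / INR (2*h)) 0 0),
                (expi_eqm a1 b1 p (m+h+a)) end.
      - replace (RtoC 2) with (Cplus (RtoC 1) (RtoC 1)) by (rewrite <- RtoC_plus; f_equal; ring). ring.
      - nrm. field. auto.
      - nrm. field. auto.
      - nrm. field. auto. }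
  rewrite csum_scal, !Cmult_assoc, <- !RtoC_mult. f_equal. f_equal.
  rewrite mult_INR in *. simpl INR in *. field. split; lra.
Qed.

Lemma LHS_odd N n m h p : (0 < N)%nat -> (n < N)%nat -> (m < N)%nat -> N = (2*h)%nat -> n = (2*p+1)%nat ->
  innerP N (Phi N (Z.of_nat n)) (F_op N (Phi N (Z.of_nat m))) =
  Cmult (RtoC (sqrt 2 / INR N)) (csum h (fun a => expi (PI * (2 * INR a + 1) * (INR n - 2 * INR m) / INR N))).
Proof.
  intros hN hn hm HNh Hnp. pose proof (INR_posN N hN) as HN. pose proof (sqrt_lt_R0 _ HN) as HsN.
  rewrite LHS_red, Ep_Phi, Op_Phi by auto.
  rewrite <- Cmult_plus_distr_l, <- csum_add.
  assert (Hh : INR h <> 0). { subst N. rewrite mult_INR in HN. simpl in HN. lra. }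
  subst N n. rewrite csum_pair.
  rewrite (csum_ext _ _ (fun a => Cmult (RtoC 2) (expi (PI * (2 * INR a + 1) * (INR (2*p+1) - 2 * INR m) / INR (2*h))))).
  2:{ intros a Ha.
      match goal with |- Cplus (Cplus (expi ?a0) (expi ?b0)) (Cplus (expi ?a1) (expi ?b1)) = _ =>
        rewrite (expi_eqm b0 a0 (m+h+a) p),
                (expi_eq a1 (PI * (2 * INR a + 1) * (INR (2*p+1) - 2 * INR m) / INR (2*h)) 0 0),
                (expi_eq b1 (PI * (2 * INR a + 1) * (INR (2*p+1) - 2 * INR m) / INR (2*h)) (m+h+a) p) end.
      - replace (RtoC 2) with (Cplus (RtoC 1) (RtoC 1)) by (rewrite <- RtoC_plus; f_equal; ring). ring.
      - nrm. field. auto.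
      - nrm. field. auto.
      - nrm. field. auto. }
  rewrite csum_scal, !Cmult_assoc, <- !RtoC_mult. f_equal. f_equal.
  rewrite mult_INR in *. simpl INR in *. field. split; lra.
Qed.



Lemma ev2 p : Nat.even (2*p) = true.
Proof. apply Nat.even_spec. exists p. reflexivity. Qed.
Lemma ev2_1 p : Nat.even (2*p+1) = false.
Proof. rewrite <- Nat.negb_odd. replace (Nat.odd (2*p+1)) with true. reflexivity. symmetry. apply Nat.odd_spec. exists p. reflexivity. Qed.
Lemma div2h h : Nat.div (2*h) 2 = h.
Proof. rewrite Nat.mul_comm, Nat.div_mul; lia. Qed.

Lemma RHS_lo N n m h (eps : R) (j : nat -> nat) (j' : nat -> nat) :
  (0 < N)%nat -> (m < h)%nat -> N = (2*h)%nat ->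
  (forall a, (a < h)%nat -> Mmat N n a m = Cmult (if Nat.even n then RtoC 1 else expi (PI * (INR n - 2 * INR m) / INR N)) (Fhalf N a m)) ->
  (forall a, (a < h)%nat ->
     2 * PI * INR n * INR a / INR N + ((if Nat.even n then 0 else PI * (INR n - 2 * INR m) / INR N) + - (2 * PI * INR a * INR m / (INR N / 2))) + 2 * INR (j a) * PI
     = PI * (2 * INR a + eps) * (INR n - 2 * INR m) / INR N + 2 * INR (j' a) * PI) ->
  csum N (fun a => Cmult (FNinv N n a) (Mmat N n a m)) =
  Cmult (RtoC (sqrt 2 / INR N)) (csum h (fun a => expi (PI * (2 * INR a + eps) * (INR n - 2 * INR m) / INR N))).
Proof.
  intros hN hm HNh HM Hang. pose proof (INR_posN N hN) as HN.
  rewrite HNh at 1. rewrite csum_split2.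
  rewrite (csum_zero h (fun i => Cmult (FNinv N n (h + i)) (Mmat N n (h + i) m))).
  2:{ intros k Hk. unfold Mmat. cbv zeta. replace (N / 2)%nat with h by (subst N; symmetry; apply div2h).
      replace (h + k <? h)%nat with false by (symmetry; apply Nat.ltb_ge; lia).
      replace (h <=? m)%nat with false by (symmetry; apply Nat.leb_gt; lia).
      rewrite Bool.andb_false_r. cbn [andb]. ring. }
  rewrite Cplus_0_r, <- csum_scal. apply csum_ext. intros a Ha. rewrite HM by auto.
  unfold FNinv, Fhalf. destruct (Nat.even n).
  - rewrite Cmult_1_l. rewrite comb2, const_eq by auto. f_equal. apply (expi_eq _ _ (j a) (j' a)).
    rewrite <- Hang by auto. ring.
  - rewrite comb3, const_eq by auto. f_equal. apply (expi_eq _ _ (j a) (j' a)).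
    rewrite <- Hang by auto. ring.
Qed.

Lemma Mmat_lo N n m h a : (m < h)%nat -> N = (2*h)%nat -> (a < h)%nat ->
  Mmat N n a m = Cmult (if Nat.even n then RtoC 1 else expi (PI * (INR n - 2 * INR m) / INR N)) (Fhalf N a m).
Proof.
  intros hm HNh Ha. unfold Mmat. cbv zeta. replace (N / 2)%nat with h by (subst N; symmetry; apply div2h).
  replace (a <? h)%nat with true by (symmetry; apply Nat.ltb_lt; lia).
  replace (m <? h)%nat with true by (symmetry; apply Nat.ltb_lt; lia).
  cbn [andb]. destruct (Nat.even n); [ring|reflexivity].
Qed.

Lemma Mmat_hi N n m h b : (h <= m)%nat -> N = (2*h)%nat -> (b < h)%nat ->
  Mmat N n (h + b) m = Cmult (if Nat.even n then RtoC 1 else expi (PI * (INR n - (2 * INR m - INR N)) / INR N)) (Fhalf N b (m - h)).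
Proof.
  intros hm HNh Ha. unfold Mmat. cbv zeta. replace (N / 2)%nat with h by (subst N; symmetry; apply div2h).
  replace (h + b <? h)%nat with false by (symmetry; apply Nat.ltb_ge; lia).
  replace (h <=? h + b)%nat with true by (symmetry; apply Nat.leb_le; lia).
  replace (h <=? m)%nat with true by (symmetry; apply Nat.leb_le; lia).
  replace (h + b - h)%nat with b by lia.
  cbn [andb]. destruct (Nat.even n); [ring|reflexivity].
Qed.

Lemma RHS_hi N n m h (eps : R) (j : nat -> nat) (j' : nat -> nat) :
  (0 < N)%nat -> (h <= m)%nat -> N = (2*h)%nat ->
  (forall a, (a < h)%nat ->
     2 * PI * INR n * INR (h + a) / INR N + ((if Nat.even n then 0 else PI * (INR n - (2 * INR m - INR N)) / INR N) + - (2 * PI * INR a * INR (m - h) / (INR N / 2))) + 2 * INR (j a) * PI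
     = PI * (2 * INR a + eps) * (INR n - 2 * INR m) / INR N + 2 * INR (j' a) * PI) ->
  csum N (fun a => Cmult (FNinv N n a) (Mmat N n a m)) =
  Cmult (RtoC (sqrt 2 / INR N)) (csum h (fun a => expi (PI * (2 * INR a + eps) * (INR n - 2 * INR m) / INR N))).
Proof.
  intros hN hm HNh Hang. pose proof (INR_posN N hN) as HN.
  rewrite HNh at 1. rewrite csum_split2.
  rewrite (csum_zero h (fun i => Cmult (FNinv N n i) (Mmat N n i m))).
  2:{ intros k Hk. unfold Mmat. cbv zeta. replace (N / 2)%nat with h by (subst N; symmetry; apply div2h).
      replace (m <? h)%nat with false by (symmetry; apply Nat.ltb_ge; lia).
      replace (h <=? k)%nat with false by (symmetry; apply Nat.leb_gt; lia).
      rewrite !Bool.andb_false_r. cbn [andb]. ring. }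
  rewrite Cplus_0_l, <- csum_scal. apply csum_ext. intros a Ha. rewrite (Mmat_hi N n m h a) by auto.
  unfold FNinv, Fhalf. destruct (Nat.even n).
  - rewrite Cmult_1_l. rewrite comb2, const_eq by auto. f_equal. apply (expi_eq _ _ (j a) (j' a)).
    rewrite <- Hang by auto. ring.
  - rewrite comb3, const_eq by auto. f_equal. apply (expi_eq _ _ (j a) (j' a)).
    rewrite <- Hang by auto. ring.
Qed.



Theorem mainTheorem6 (N : nat) (hN : (0 < N)%nat) (heven : Nat.even N = true)
  (n m : nat) (hn : (n < N)%nat) (hm : (m < N)%nat) :
  innerP N (Phi N (Z.of_nat n)) (F_op N (Phi N (Z.of_nat m)))
  = csum N (fun a => Cmult (FNinv N n a) (Mmat N n a m)).
Proof.
  apply Nat.even_spec in heven. destruct heven as [h HNh].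
  pose proof (INR_posN N hN) as HN.
  assert (Hh : INR h <> 0). { rewrite HNh, mult_INR in HN. simpl in HN. lra. }
  destruct (Nat.Even_or_Odd n) as [[p Hp]|[p Hp]].
  - rewrite (LHS_even N n m h p) by auto.
    destruct (Nat.lt_ge_cases m h) as [Hmh|Hmh].
    + rewrite (RHS_lo N n m h 0 (fun _ => 0%nat) (fun _ => 0%nat));
        [ | auto | auto | auto | intros; apply (Mmat_lo N n m h); auto | intros a Ha; subst N n; rewrite ev2; nrm; field; auto].
      f_equal. apply csum_ext. intros a _. rewrite Rplus_0_r. reflexivity.
    + rewrite (RHS_hi N n m h 0 (fun _ => 0%nat) (fun a => (p + a)%nat)) by
        (auto; intros a Ha; subst N n; rewrite ev2; rewrite minus_INR by lia; nrm; field; auto).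
      f_equal. apply csum_ext. intros a _. rewrite Rplus_0_r. reflexivity.
  - rewrite (LHS_odd N n m h p) by auto.
    destruct (Nat.lt_ge_cases m h) as [Hmh|Hmh].
    + rewrite (RHS_lo N n m h 1 (fun _ => 0%nat) (fun _ => 0%nat));
        [ | auto | auto | auto | intros; apply (Mmat_lo N n m h); auto | intros a Ha; subst N n; rewrite ev2_1; nrm; field; auto].
      reflexivity.
    + rewrite (RHS_hi N n m h 1 (fun _ => 0%nat) (fun a => (p + a + 1)%nat)) by
        (auto; intros a Ha; subst N n; rewrite ev2_1; rewrite minus_INR by lia; nrm; field; auto).
      reflexivity.
Qed.
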